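(* The dual-rail Bell state $Q=\frac{1}{\sqrt2}\big(a^\dagger_1a^\dagger_3+a^\dagger_2a^\dagger_4\big)$ (i.e. $(|1,0,1,0\rangle+|0,1,0,1\rangle)/\sqrt2$) cannot be generated by heralded linear optics from any multi-mode Fock input state containing three photons. In particular, for $N=5$, input $|1,1,1,0,0\rangle$ and heralding pattern $(1)$ on mode $5$, there is no complex $5\times5$ matrix $A$ and no $\gamma\in\mathbb{C}$ with $\gamma G=Q$.
   Context: Heralded linear-optical state generation model. States with a fixed photon number are homogeneous polynomials in commuting variables $a^\dagger_1,\dots,a^\dagger_N$ applied to the vacuum. Given $N$ modes, an arbitrary complex $N\times N$ matrix $A$ (not required to be unitary), and a Fock input $\prod_{i=1}^N\frac{1}{\sqrt{n_i!}}(a^\dagger_{i,\mathrm{in}})^{n_i}|0\rangle$, the output is $F|0\rangle$ with $F=\prod_{i=1}^N\frac{1}{\sqrt{n_i!}}\big(\sum_{j=1}^N A_{i,j}a^\dagger_j\big)^{n_i}$. Heralding the last $M$ modes on the pattern $(m_1,\dots,m_M)$ (entries $\ge0$), $m=\sum_jm_j$, gives $G=\frac{1}{\prod_jm_j!}\,\frac{\partial^{m}F}{\partial(a^\dagger_{N-M+1})^{m_1}\cdots\partial(a^\dagger_N)^{m_M}}\Big|_{a^\dagger_{N-M+1}=\cdots=a^\dagger_N=0}$, a polynomial in $a^\dagger_1,\dots,a^\dagger_{N-M}$. A target $Q$ on the first $N_T\le N-M$ modes (other unheralded modes in vacuum) can be generated from a given input and heralding pattern if there exist a complex $N\times N$ matrix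 $A$ and $\gamma\in\mathbb{C}$ with $\gamma G=Q$; it can be generated from an $n$-photon Fock input if this holds for some number of modes, some Fock input with $n$ photons and some heralding pattern (necessarily with $n-\deg Q$ photons). *)

(* Defs.v *)
From HB Require Import structures.
From mathcomp Require Import all_boot all_order all_algebra all_field.
From mathcomp Require Import complex.
From mathcomp.multinomials Require Import mpoly.
From mathcomp Require Import Rstruct.
Set Implicit Arguments. Unset Strict Implicit. Unset Printing Implicit Defensive.
Import GRing.Theory Num.Theory.
Local Open Scope ring_scope.

Definition C : numClosedFieldType := complex Rdefinitions.R.

(* Modes are indexed by 'I_(K + M): the first K modes are unheralded,
   the last M modes (rshift K k, k : 'I_M) are heralded.
   Creation operators a^dagger_j are the commuting variables 'X_j. *)

Definition outF (N : nat) (A : 'M[C]_N) (n : 'I_N -> nat) : {mpoly C[N]} :=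
  \prod_(i < N) ((sqrtC ((n i)`!)%:R)^-1 *:
                 (\sum_(j < N) A i j *: 'X_j) ^+ (n i)).

Definition herald_multinom (K M : nat) (m : 'I_M -> nat) : 'X_{1..K + M} :=
  [multinom (match split j with inl _ => 0%N | inr k => m k end) | j < K + M].

Definition herald_subst (K M : nat) : (K + M).-tuple {mpoly C[K + M]} :=
  [tuple (match split j with inl _ => 'X_j | inr _ => 0 end) | j < K + M].

Definition heraldG (K M : nat) (A : 'M[C]_(K + M)) (n : 'I_(K + M) -> nat)
    (m : 'I_M -> nat) : {mpoly C[K + M]} :=
  ((\prod_(k < M) ((m k)`!)%:R : C)^-1) *:
    ((outF A n)^`M[herald_multinom K m] \mPo herald_subst K M).

(* variable a^dagger_i given by a nat index (0 if out of range; only used for i < 4 <= K) *)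
Definition Xn (N : nat) (i : nat) : {mpoly C[N]} :=
  \sum_(j < N | (j : nat) == i) 'X_j.

(* Dual-rail Bell state (a1 a3 + a2 a4)/sqrt 2 on modes 1..4 (indices 0..3). *)
Definition bellQ (N : nat) : {mpoly C[N]} :=
  (sqrtC (2 : C))^-1 *: (Xn N 0 * Xn N 2 + Xn N 1 * Xn N 3).

(* Main.v *)
Require Import Defs.
From HB Require Import structures.
From mathcomp Require Import all_boot all_order all_algebra all_field.
From mathcomp Require Import complex.
From mathcomp.multinomials Require Import mpoly.
From mathcomp Require Import Rstruct.
From mathcomp Require Import ring.
Import GRing.Theory Num.Theory.
Local Open Scope ring_scope.
Set Implicit Arguments. Unset Strict Implicit.

Section Gen.
Variables (N : nat) (P : pred 'I_N) (L : 'I_N -> {mpoly C[N]}).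
Inductive gen : {mpoly C[N]} -> Prop :=
| genC c : gen c%:MP
| genL i : P i -> gen (L i)
| genD p q : gen p -> gen q -> gen (p + q)
| genM p q : gen p -> gen q -> gen (p * q).

Lemma gen_eval x y : (forall i, P i -> (L i).@[x] = (L i).@[y]) ->
  forall p, gen p -> p.@[x] = p.@[y].
Proof.
move=> H p; elim=> [c|i Pi|p1 q1 _ e1 _ e2|p1 q1 _ e1 _ e2].
- by rewrite !mevalC.
- exact: H.
- by rewrite !mevalD e1 e2.
- by rewrite !mevalM e1 e2.
Qed.

Lemma gen_deriv j : (forall i, P i -> exists c, mderiv j (L i) = c%:MP) ->
  forall p, gen p -> gen (mderiv j p).
Proof.
move=> H p; elim=> [c|i Pi|p1 q1 g1 e1 g2 e2|p1 q1 g1 e1 g2 e2].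
- by rewrite mderivC -mpolyC0; apply: genC.
- by have [c ->] := H i Pi; apply: genC.
- by rewrite mderivD; apply: genD.
- by rewrite mderivM; apply: genD; apply: genM.
Qed.

Lemma gen_derivm mm : (forall j i, P i -> exists c, mderiv j (L i) = c%:MP) ->
  forall p, gen p -> gen (p^`M[mm]).
Proof.
move=> H p gp; rewrite mderivm_foldr /=.
elim: (flatten _) => [//|j s IH] /=.
have := @gen_deriv j (H j) _ IH. exact.
Qed.

Lemma gen_scale c p : gen p -> gen (c *: p).
Proof. by move=> gp; rewrite -mul_mpolyC; apply: genM => //; apply: genC. Qed.

Lemma gen_exp p k : gen p -> gen (p ^+ k).
Proof.
move=> gp; elim: k => [|k IH]; first by rewrite expr0 -mpolyC1; apply: genC.
by rewrite exprS; apply: genM.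
Qed.
End Gen.

Lemma deriv_lin N (a : 'I_N -> C) j :
  mderiv j (\sum_(k < N) a k *: 'X_k) = (a j)%:MP.
Proof.
rewrite (big_morph (mderiv j) (@mderivD _ _ j) (@mderiv0 _ _ j)).
rewrite (bigD1 j) //= big1 ?addr0.
  rewrite mderivZ mderivX mnm1E eqxx.
  have -> : (U_(j) - U_(j))%MM = 0%MM by apply/mnmP => k; rewrite mnmBE subnn mnm0E.
  by rewrite mpolyX0 scale1r -mul_mpolyC mulr1.
move=> k kj; rewrite mderivZ mderivX mnm1E (negbTE kj) scale0r scaler0 //.
Qed.
Lemma arith4 (R : comRingType) (x0 x1 x2 x3 : R) :
  (forall w0 w1 w2 w3 : R, (w0+x0)*(w2+x2)+(w1+x1)*(w3+x3) = w0*w2+w1*w3) ->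
  [/\ x0 = 0, x1 = 0, x2 = 0 & x3 = 0].
Proof.
move=> H.
have h0 := H 0 0 0 0; have h1 := H 1 0 0 0; have h2 := H 0 1 0 0.
have h3 := H 0 0 1 0; have h4 := H 0 0 0 1.
have e2 : x2 = ((1+x0)*(0+x2)+(0+x1)*(0+x3)) - ((0+x0)*(0+x2)+(0+x1)*(0+x3)) by ring.
have e3 : x3 = ((0+x0)*(0+x2)+(1+x1)*(0+x3)) - ((0+x0)*(0+x2)+(0+x1)*(0+x3)) by ring.
have e0 : x0 = ((0+x0)*(1+x2)+(0+x1)*(0+x3)) - ((0+x0)*(0+x2)+(0+x1)*(0+x3)) by ring.
have e1 : x1 = ((0+x0)*(0+x2)+(0+x1)*(1+x3)) - ((0+x0)*(0+x2)+(0+x1)*(0+x3)) by ring.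
rewrite h0 in e0 e1 e2 e3.
rewrite h1 in e2; rewrite h2 in e3; rewrite h3 in e0; rewrite h4 in e1.
split; [rewrite e0|rewrite e1|rewrite e2|rewrite e3]; ring.
Qed.
Definition padv {N : nat} (w : 'I_4 -> C) : 'I_N -> C :=
  fun j => if (j < 4)%N then w (inord j) else 0.
Definition linf N (A : 'M[C]_N) (i : 'I_N) : {mpoly C[N]} :=
  \sum_(j < N) A i j *: 'X_j.

Lemma linf_pad N (h4 : (4 <= N)%N) A i w :
  (linf A i).@[padv w] = \sum_(j < 4) A i (widen_ord h4 j) * w j.
Proof.
rewrite /linf raddf_sum /=.
under eq_bigr do rewrite mevalZ mevalXU.
rewrite (bigID (fun j : 'I_N => (j < 4)%N)) /= [X in _ + X]big1 ?addr0; last first.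
  by move=> j /negbTE Hj; rewrite /padv Hj mulr0.
rewrite (big_ord_narrow h4); apply: eq_bigr => j _.
by rewrite /padv /= ltn_ord inord_val.
Qed.

Lemma Xn_pad N a w : (a < 4)%N -> (4 <= N)%N -> (Xn N a).@[padv w] = w (inord a).
Proof.
move=> ha h4; have haN : (a < N)%N by apply: leq_trans h4.
rewrite /Xn raddf_sum /= (big_pred1 (Ordinal haN)) ?mevalXU /padv /= ?ha // => j; rewrite /= -val_eqE.

Qed.

Lemma gen_outF N (A : 'M[C]_N) n : gen (fun i => n i != 0) (linf A) (outF A n).
Proof.
rewrite /outF; apply: (big_ind (gen (fun i => n i != 0) (linf A))).
- by rewrite -mpolyC1; apply: genC.
- by move=> p q; apply: genM.
move=> i _; apply: gen_scale.
case: (boolP (n i != 0)) => [nz|]; last first.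
  by rewrite negbK => /eqP ->; rewrite expr0 -mpolyC1; apply: genC.
by apply: gen_exp; exact: (genL _ nz).
Qed.

Lemma herald_eval K M A n m w : (4 <= K)%N ->
  (@heraldG K M A n m).@[padv w] =
  (\prod_(k < M) ((m k)`!)%:R : C)^-1 *
    ((outF A n)^`M[herald_multinom K m]).@[padv w].
Proof.
move=> hK; rewrite /heraldG mevalZ comp_mpoly_meval; congr (_ * _).
apply: meval_eq => i; rewrite /herald_subst tnth_mktuple.
case: splitP => [j _|k Hk]; first by rewrite mevalXU.
rewrite meval0 /padv Hk ifN // -leqNgt.
exact: leq_trans hK (leq_addr _ _).
Qed.

Lemma count_le (I : Type) (n : I -> nat) (r : seq I) :
  (count (fun i => n i != 0) r <= \sum_(i <- r) n i)%N.
Proof.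
elim: r => [|x r IH]; first by rewrite big_nil.
rewrite big_cons /=; apply: leq_add => //; by case: (n x).
Qed.

Theorem mainTheorem3 (K M : nat) (hK : (4 <= K)%N)
    (n : 'I_(K + M) -> nat) (hn : (\sum_(i < K + M) n i)%N = 3%N)
    (m : 'I_M -> nat) (A : 'M[C]_(K + M)) (gamma : C) :
  gamma *: heraldG A n m <> bellQ (K + M).
Proof.
move=> HQ.
have h4 : (4 <= K + M)%N by exact: leq_trans hK (leq_addr _ _).
set P := fun i : 'I_(K+M) => n i != 0.
set D := (outF A n)^`M[herald_multinom K m].
have gD : gen P (linf A) D.
  apply: gen_derivm; last exact: gen_outF.
  by move=> j i _; exists (A i j); rewrite /linf deriv_lin.
set s := [seq i <- index_enum 'I_(K+M) | n i != 0].
have hs : (size s <= 3)%N by rewrite size_filter -hn; exact: count_le.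
set i0 : 'I_(K+M) := widen_ord h4 ord0.
set B : 'M[C]_(4,3) := \matrix_(j, k) (if (k < size s)%N then A (nth i0 s k) (widen_ord h4 j) else 0).
set X := kermx B.
have [k0 nz] : exists k0, row k0 X != 0.
  case: (boolP [exists k, row k X != 0]) => [/existsP //|/existsPn H].
  have X0 : X = 0.
    by apply/row_matrixP => k; rewrite row0; apply/eqP; move: (H k); rewrite negbK.
  have := mxrank_ker B; rewrite -/X X0 mxrank0 => /eqP.
  by rewrite eq_sym subn_eq0 leqNgt (leq_ltn_trans (rank_leq_col B)).
set v : 'I_4 -> C := fun j => row k0 X 0 j.
have vker : forall i, P i -> \sum_(j < 4) A i (widen_ord h4 j) * v j = 0.
  move=> i Pi.
  have iin : i \in s by rewrite mem_filter mem_index_enum andbT; exact: Pi.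
  have hk : (index i s < 3)%N by apply: leq_trans hs; rewrite index_mem.
  have R0 : row k0 X *m B = 0 by rewrite -row_mul mulmx_ker row0.
  have E := congr1 (fun Z : 'M[C]_(1,3) => Z 0 (Ordinal hk)) R0.
  rewrite /= [LHS]mxE [RHS]mxE in E.
  apply: etrans E; apply eq_bigr => j _.
  by rewrite /v [B j _]mxE /= index_mem iin nth_index // mulrC.
have key : forall w, (heraldG A n m).@[padv (fun j => w j + v j)] = (heraldG A n m).@[padv w].
  move=> w; rewrite !herald_eval //; congr (_ * _).
  apply: (gen_eval _ gD) => i Pi; rewrite !(linf_pad h4).
  under eq_bigr do rewrite mulrDr.
  by rewrite big_split /= vker // addr0.
have qE : forall w, (bellQ (K+M)).@[padv w] =
    (sqrtC 2)^-1 * (w (inord 0) * w (inord 2) + w (inord 1) * w (inord 3)).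
  by move=> w; rewrite /bellQ mevalZ mevalD !mevalM !Xn_pad.
have s0 : (sqrtC (2 : C))^-1 != 0.
  by rewrite invr_eq0 sqrtC_eq0 pnatr_eq0.
have key2 : forall w : 'I_4 -> C, (w (inord 0) + v (inord 0)) * (w (inord 2) + v (inord 2))
     + (w (inord 1) + v (inord 1)) * (w (inord 3) + v (inord 3))
   = w (inord 0) * w (inord 2) + w (inord 1) * w (inord 3).
  move=> w; apply: (mulfI s0); rewrite -(qE w).
  transitivity ((bellQ (K+M)).@[padv (fun j => w j + v j)]); first by rewrite qE.
  by rewrite -HQ !(mevalZ _ gamma) key.
have : [/\ v (inord 0) = 0, v (inord 1) = 0, v (inord 2) = 0 & v (inord 3) = 0].
  apply: arith4 => w0 w1 w2 w3; have := key2 (fun j => nth 0 [:: w0; w1; w2; w3] j).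
  by rewrite /= !inordK.
case=> z0 z1 z2 z3.
have vj : forall j, v j = 0.
  move=> j; rewrite -[j]inord_val; case: j => [[|[|[|[|k]]]] hk] //=.
apply: (negP nz); apply/eqP/rowP => j; rewrite [RHS]mxE.
exact: vj j.
Qed.
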